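(* Let $R$ be a countable ring, let $A$ be any index set, and let $(M_\alpha)_{\alpha\in A}$ be a family of left $R$-modules. Suppose $B\subseteq A$ is at most countable, that $M_\alpha$ is not algebraically compact for every $\alpha\in B$, and that $M_\alpha$ is algebraically compact for every $\alpha\in A\setminus B$. Then $$\prod_{\alpha\in A}M_\alpha\Big/\bigoplus_{\alpha\in A}M_\alpha$$ is an algebraically compact left $R$-module.
   Context: A left $R$-module $M$ is algebraically compact if every system of linear equations $\sum_{j\in J} r_{ij}x_j=m_i$ ($i\in I$, $r_{ij}\in R$, each row having almost all $r_{ij}=0$, $m_i\in M$, $I,J$ arbitrary sets) whose finite subsystems are all solvable in $M$ is itself solvable in $M$ (equivalently, $M$ is pure injective). *)

(* Defs.v *)
From Stdlib Require List.
From HB Require Import structures.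
From mathcomp Require Import all_boot all_order all_algebra.
Set Implicit Arguments. Unset Strict Implicit. Unset Printing Implicit Defensive.
Import GRing.Theory.
Local Open Scope ring_scope.

(* A system of linear equations  sum_j r_ij x_j = m_i  (i in I) over R with
   unknowns indexed by J: each row i is given as a finite list of
   (variable, coefficient) pairs, i.e. row i has finitely many nonzero
   coefficients (repeated variables are summed). *)
Definition lin_row (R : nzRingType) (T : lmodType R) (J : Type)
  (row : seq (J * R)) (x : J -> T) : T :=
  \sum_(p <- row) p.2 *: x p.1.

Definition alg_compact (R : nzRingType) (M : lmodType R) : Prop :=
  forall (I J : Type) (row : I -> seq (J * R)) (m : I -> M),
    (forall F : seq I, exists x : J -> M,
        forall i, Stdlib.Lists.List.In i F -> lin_row (row i) x = m i) ->
    exists x : J -> M, forall i, lin_row (row i) x = m i.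

(* Elements of the product prod_a M a are dependent functions; the direct sum
   is the submodule of finitely supported ones. *)
Definition fin_supp (R : nzRingType) (A : Type) (M : A -> lmodType R)
  (f : forall a, M a) : Prop :=
  exists s : seq A, forall a, f a != 0 -> Stdlib.Lists.List.In a s.

Definition prod_lin_row (R : nzRingType) (A : Type) (M : A -> lmodType R)
  (J : Type) (row : seq (J * R)) (x : J -> forall a, M a) : forall a, M a :=
  fun a => \sum_(p <- row) p.2 *: x p.1 a.

(* Equality in the quotient  prod_a M a / (+)_a M a  of classes of
   f and g (with representatives in the product): f - g in the direct sum. *)
Definition eq_mod_sum (R : nzRingType) (A : Type) (M : A -> lmodType R)
  (f g : forall a, M a) : Prop :=
  fin_supp (fun a => f a - g a).

(* Algebraic compactness of the quotient module prod_a M a / (+)_a M a,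
   expressed with representatives: unknowns and constants of the quotient are
   classes of elements of the product, and an equation holds in the quotient
   iff it holds modulo the direct sum. *)
Definition alg_compact_prod_mod_sum (R : nzRingType) (A : Type)
  (M : A -> lmodType R) : Prop :=
  forall (I J : Type) (row : I -> seq (J * R)) (m : I -> forall a, M a),
    (forall F : seq I, exists x : J -> forall a, M a,
        forall i, Stdlib.Lists.List.In i F -> eq_mod_sum (prod_lin_row (row i) x) (m i)) ->
    exists x : J -> forall a, M a,
      forall i, eq_mod_sum (prod_lin_row (row i) x) (m i).

Definition countable_type (T : Type) : Prop :=
  exists f : T -> nat, injective f.

Definition countable_subset (T : Type) (B : T -> Prop) : Prop :=
  exists f : T -> nat, forall a b, B a -> B b -> f a = f b -> a = b.

(* Main.v *)
Require Import Defs.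
From mathcomp Require Import all_boot all_order all_algebra.
From mathcomp Require Import boolp classical_sets.
Set Implicit Arguments. Unset Strict Implicit. Unset Printing Implicit Defensive.
Import GRing.Theory.
Local Open Scope ring_scope.

Lemma In_nil_false (T : Type) (x : T) : List.In x [::] -> False.
Proof. by []. Qed.

Section Basic.
Variables (R : nzRingType) (A : Type) (M : A -> lmodType R).

Lemma fs_sub (f g : forall a, M a) :
  fin_supp f -> fin_supp g -> fin_supp (fun a => f a - g a).
Proof.
move=> [s1 h1] [s2 h2]; exists (s1 ++ s2) => a H.
apply: List.in_or_app.
case: (eqVneq (f a) 0) => Hf; last by left; apply: h1.
right; apply: h2; apply: contraNneq H => ->; by rewrite Hf subr0.
Qed.

Lemma fs_add (f g : forall a, M a) :
  fin_supp f -> fin_supp g -> fin_supp (fun a => f a + g a).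
Proof.
move=> [s1 h1] [s2 h2]; exists (s1 ++ s2) => a H.
apply: List.in_or_app.
case: (eqVneq (f a) 0) => Hf; last by left; apply: h1.
right; apply: h2; apply: contraNneq H => ->; by rewrite Hf addr0.
Qed.

Lemma fs_ext (f g : forall a, M a) :
  (forall a, f a = g a) -> fin_supp f -> fin_supp g.
Proof. by move=> E [s h]; exists s => a; rewrite -E; apply: h. Qed.

Variable J : Type.

Lemma plr_sub (row : seq (J * R)) (x y : J -> forall a, M a) a :
  prod_lin_row row (fun k a => x k a - y k a) a =
  prod_lin_row row x a - prod_lin_row row y a.
Proof.
rewrite /prod_lin_row -sumrB; apply: eq_bigr => q _; by rewrite scalerBr.
Qed.

Lemma plr_add (row : seq (J * R)) (x y : J -> forall a, M a) a :
  prod_lin_row row (fun k a => x k a + y k a) a =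
  prod_lin_row row x a + prod_lin_row row y a.
Proof.
rewrite /prod_lin_row -big_split; apply: eq_bigr => q _; by rewrite scalerDr.
Qed.

Lemma plr_ext (row : seq (J * R)) (x y : J -> forall a, M a) :
  (forall q, List.In q row -> x q.1 = y q.1) ->
  prod_lin_row row x = prod_lin_row row y.
Proof.
move=> H; apply: functional_extensionality_dep => a.
rewrite /prod_lin_row; elim: row H => [|q r IH] H; first by rewrite !big_nil.
rewrite !big_cons (H q) ?IH //; first by move=> q' Hq'; apply: H; right.
by left.
Qed.

Lemma union_supp (I : Type) (F : seq I) (f : I -> forall a, M a) :
  (forall i, List.In i F -> fin_supp (f i)) ->
  exists s : seq A, forall i, List.In i F -> forall a, f i a != 0 -> List.In a s.
Proof.
elim: F => [|i F IH] H; first by exists [::].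
have [s1 h1] := H i (or_introl erefl).
have [s2 h2] := IH (fun i' Hi' => H i' (or_intror Hi')).
exists (s1 ++ s2) => i' [<-|Hi'] a Ha; apply: List.in_or_app; first by left; apply: h1.
by right; apply: h2 Hi' a Ha.
Qed.

End Basic.

Fixpoint cumul (T : Type) (g : nat -> seq T) n : seq T :=
  match n with 0 => g 0%N | S n' => g n ++ cumul g n' end.

Lemma cumul_in (T : Type) (g : nat -> seq T) k n i :
  (k <= n)%N -> List.In i (g k) -> List.In i (cumul g n).
Proof.
elim: n => [|n IH]; first by rewrite leqn0 => /eqP ->.
rewrite leq_eqVlt => /orP[/eqP -> H|]; first by apply: List.in_or_app; left.
by rewrite ltnS => Hk H; apply: List.in_or_app; right; apply: IH.
Qed.

Lemma cumul_ex (T : Type) (g : nat -> seq T) n i :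
  List.In i (cumul g n) -> exists k, (k <= n)%N /\ List.In i (g k).
Proof.
elim: n => [|n IH] /=; first by exists 0%N.
move=> H0; have [H|H] := List.in_app_or _ _ _ H0; first by exists n.+1.
have [k [Hk H']] := IH H.
by exists k; split=> //; apply: leqW.
Qed.

Lemma cumul_mono (T : Type) (g : nat -> seq T) n n' i :
  (n <= n')%N -> List.In i (cumul g n) -> List.In i (cumul g n').
Proof.
move=> Hn H0; have [k [Hk H]] := cumul_ex H0; apply: (cumul_in (k := k)) H.
exact: leq_trans Hn.
Qed.

Lemma least_nat (Q : nat -> Prop) : (exists n, Q n) ->
  exists n, Q n /\ forall k, (k < n)%N -> ~ Q k.
Proof.
move=> [n Hn]; elim: n {-2}n (leqnn n) Hn => [|N IH] n Hn HQ.
  by exists n; split=> // k; move: Hn; rewrite leqn0 => /eqP ->.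
have [H|H] := pselect (exists k, (k < n)%N /\ Q k).
  have [k [Hk Qk]] := H; apply: (IH k) => //; by rewrite -ltnS (leq_trans Hk).
exists n; split=> // k Hk Qk; apply: H; by exists k.
Qed.

Lemma lin_row_nil (R : nzRingType) (T : lmodType R) (J : Type) (x : J -> T) :
  lin_row [::] x = 0.
Proof. by rewrite /lin_row big_nil. Qed.

Lemma lin_row_1 (R : nzRingType) (T : lmodType R) (J : Type) (x : J -> T) k :
  lin_row [:: (k, 1)] x = x k.
Proof. by rewrite /lin_row big_seq1 scale1r. Qed.

Section Main.
Variables (R : nzRingType) (A : Type) (M : A -> lmodType R) (B : A -> Prop).
Variables (fB : A -> nat) (hfB : forall a b, B a -> B b -> fB a = fB b -> a = b).
Variable hac : forall a, ~ B a -> alg_compact (M a).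
Variables (I J : Type) (row : I -> seq (J * R)) (m : I -> forall a, M a).
Variable G : set (J * (forall a, M a)).

Definition agree (x : J -> forall a, M a) := forall k v, G (k, v) -> x k = v.
Definition solved (F : seq I) (x : J -> forall a, M a) :=
  forall i, List.In i F -> eq_mod_sum (prod_lin_row (row i) x) (m i).

Fixpoint badl (E Bl : nat -> seq A) n : seq A :=
  match n with 0 => E 0%N ++ Bl 0%N | S n' => E n ++ Bl n ++ badl E Bl n' end.

Lemma badl_in E Bl k n a : (k <= n)%N -> List.In a (E k ++ Bl k) -> List.In a (badl E Bl n).
Proof.
elim: n => [|n IH]; first by rewrite leqn0 => /eqP ->.
rewrite leq_eqVlt => /orP[/eqP -> H|]; first by rewrite /= catA; apply: List.in_or_app; left.
rewrite ltnS => Hk H; rewrite /=; apply: List.in_or_app; right; apply: List.in_or_app; right.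
exact: IH.
Qed.

Definition nmax (I' : Type) (F : seq ((nat * I) + I')) : nat :=
  foldr (fun q acc => maxn (match q with inl p => p.1 | inr _ => 0%N end) acc) 0%N F.

Lemma nmax_ge (I' : Type) (F : seq ((nat * I) + I')) n i :
  List.In (inl (n, i)) F -> (n <= nmax F)%N.
Proof.
elim: F => [//|q F IH] /= [->|H]; first by rewrite leq_maxl.
by rewrite (leq_trans (IH H)) // leq_maxr.
Qed.

Lemma diag (K : nat -> seq I)
  (Kmono : forall n n' i, (n <= n')%N -> List.In i (K n) -> List.In i (K n'))
  (hK : forall n, exists x, agree x /\ solved (K n) x) :
  exists x, agree x /\ forall n, solved (K n) x.
Proof.
pose xs n := proj1_sig (cid (hK n)).
have xsP n : agree (xs n) /\ solved (K n) (xs n) := proj2_sig (cid (hK n)).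
have hE n : exists s : seq A, forall i, List.In i (K n) -> forall a,
    prod_lin_row (row i) (xs n) a - m i a != 0 -> List.In a s.
  apply: (union_supp (f := fun i a => prod_lin_row (row i) (xs n) a - m i a)).
  by move=> i Hi; apply: (proj2 (xsP n)).
pose E n := proj1_sig (cid (hE n)).
have EP n : forall i, List.In i (K n) -> forall a,
    prod_lin_row (row i) (xs n) a - m i a != 0 -> List.In a (E n) := proj2_sig (cid (hE n)).
have hBl n : exists s : seq A, forall a, B a -> fB a = n -> List.In a s.
  have [[a0 [Ba0 Ha0]]|H] := pselect (exists a0, B a0 /\ fB a0 = n).
    exists [:: a0] => a Ba Ha; left; apply: hfB => //; by rewrite Ha Ha0.
  by exists [::] => a Ba Ha; apply: H; exists a.
pose Bl n := proj1_sig (cid (hBl n)).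
have BlP n : forall a, B a -> fB a = n -> List.In a (Bl n) := proj2_sig (cid (hBl n)).
have exact_of n i a : List.In i (K n) -> ~ List.In a (E n) ->
    prod_lin_row (row i) (xs n) a = m i a.
  move=> Hi Ha; apply/eqP; rewrite -subr_eq0; apply/negPn/negP => H.
  by apply: Ha; apply: (EP n i Hi).
have coord a : exists ya : J -> M a, (forall k v, G (k, v) -> ya k = v a) /\
    forall n i, List.In i (K n) -> lin_row (row i) ya = m i a \/ List.In a (badl E Bl n).
  have [HQ|HQ] := pselect (exists n, List.In a (E n) \/ (B a /\ fB a = n)).
    have [m0 [Qm0 Hm0]] := least_nat HQ.
    exists (fun k => xs m0.-1 k a); split.
      by move=> k v Hkv; rewrite ((proj1 (xsP _)) k v Hkv).
    move=> n i Hi; case: (ltnP n m0) => Hn.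
      left; apply: (exact_of m0.-1 i a).
        apply: (Kmono n) => //; by rewrite -ltnS (ltn_predK Hn).
      move=> HE; apply: (Hm0 m0.-1); last by left.
      by rewrite prednK // (leq_ltn_trans _ Hn).
    right; apply: (badl_in Hn); apply: List.in_or_app; case: Qm0 => [H|[Ba Ha]].
      by left. by right; apply: BlP.
  have nB : ~ B a by move=> Ba; apply: HQ; exists (fB a); right.
  have nE n : ~ List.In a (E n) by move=> H; apply: HQ; exists n; left.
  pose I' := ((nat * I) + (J * (forall a, M a)))%type.
  pose row' (q : I') : seq (J * R) := match q with
    | inl (n, i) => if `[< List.In i (K n) >] then row i else [::]
    | inr (k, v) => if `[< G (k, v) >] then [:: (k, 1)] else [::] end.
  pose m' (q : I') : M a := match q with
    | inl (n, i) => if `[< List.In i (K n) >] then m i a else 0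
    | inr (k, v) => if `[< G (k, v) >] then v a else 0 end.
  have [|z Hz] := @hac a nB I' J row' m'.
    move=> F; exists (fun k => xs (nmax F) k a) => q Hq.
    case: q Hq => [[n i]|[k v]] Hq /=.
      case: asboolP => Hi; last by rewrite lin_row_nil.
      apply: (exact_of (nmax F) i a) => //.
      exact: (Kmono n _ _ (nmax_ge Hq)).
    case: asboolP => Hkv; last by rewrite lin_row_nil.
    by rewrite lin_row_1 ((proj1 (xsP _)) k v Hkv).
  exists z; split.
    move=> k v Hkv; have := Hz (inr (k, v)); rewrite /row' /m'.
    by case: asboolP => // _; rewrite lin_row_1.
  move=> n i Hi; left; have := Hz (inl (n, i)); rewrite /row' /m'.
  by case: asboolP.
pose yf a := proj1_sig (cid (coord a)).
have yfP a := proj2_sig (cid (coord a)).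
exists (fun k a => yf a k); split.
  move=> k v Hkv; apply: functional_extensionality_dep => a.
  exact: (proj1 (yfP a)).
move=> n i Hi; exists (badl E Bl n) => a Ha.
have [H|//] := proj2 (yfP a) n i Hi.
by move: Ha; rewrite /prod_lin_row; rewrite /lin_row in H; rewrite H subrr eqxx.
Qed.


Definition good := forall F, exists x, agree x /\ solved F x.

Lemma sum_ext_In (T : Type) (V : nmodType) (s : seq T) (f g : T -> V) :
  (forall q, List.In q s -> f q = g q) -> \sum_(q <- s) f q = \sum_(q <- s) g q.
Proof.
elim: s => [|q s IH] H; first by rewrite !big_nil.
by rewrite !big_cons H ?IH //; [move=> q' Hq'; apply: H; right | left].
Qed.

Lemma In_filter (T : Type) (P : pred T) (s : seq T) q :
  List.In q (filter P s) -> List.In q s.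
Proof.
elim: s => [//|y s IH] /=; case: (P y) => /=; last by move=> H; right; apply: IH.
by move=> [->|H]; [left|right; apply: IH].
Qed.

Lemma nth_In (T : Type) (d : T) (s : seq T) t :
  (t < size s)%N -> List.In (nth d s t) s.
Proof.
elim: s t => [//|y s IH] [|t] //= H; first by left.
by right; apply: IH.
Qed.

Lemma In_nth' (T : Type) (s : seq T) x :
  List.In x s -> exists t, (t < size s)%N /\ nth x s t = x.
Proof.
elim: s => [//|y s IH] /= [->|H]; first by exists 0%N.
have [t [Ht Hn]] := IH H; by exists t.+1.
Qed.

Variable j : J.
Hypothesis hj : ~ exists v, G (j, v).

Definition Db k := `[< exists v, G (k, v) >].
Definition jeq (k : J) : pred J := fun k' => `[< k = k' >].
Definition vl (F : seq I) : seq J := foldr (fun i acc => map fst (row i) ++ acc) [::] F.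
Definition rho F k := if jeq k j then 0%N else (find (jeq k) (vl F)).+1.
Definition nu F n := if n is n'.+1 then nth j (vl F) n' else j.
Definition dfilt (r : seq (J * R)) := filter (fun q => ~~ Db q.1) r.
Definition code F := map (fun i => map (fun q => (rho F q.1, q.2)) (dfilt (row i))) F.

Lemma has_In k s : List.In k s -> has (jeq k) s.
Proof.
elim: s => [//|y s IH] /= [->|H]; first by apply/orP; left; apply/asboolP.
by apply/orP; right; apply: IH.
Qed.

Lemma vl_In F i q : List.In i F -> List.In q (row i) -> List.In q.1 (vl F).
Proof.
elim: F => [//|i' F IH] /= [->|H] Hq; apply: List.in_or_app.
  by left; apply: List.in_map.
by right; apply: IH.
Qed.

Lemma nu_rho F k : List.In k (vl F) -> nu F (rho F k) = k.
Proof.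
rewrite /rho; case: ifP => [/asboolP -> //|_] Hk /=.
by have /asboolP := nth_find j (has_In Hk).
Qed.

Definition Xs F (v : forall a, M a) := exists x, agree x /\ x j = v /\ solved F x.
Definition Hs F (h : forall a, M a) := exists x : J -> forall a, M a,
  (forall k v, G (k, v) -> forall a, x k a = 0) /\ x j = h /\
  forall i, List.In i F -> fin_supp (prod_lin_row (row i) x).

Lemma plr_dfilt (x : J -> forall a, M a) r a :
  (forall k v, G (k, v) -> forall a, x k a = 0) ->
  prod_lin_row r x a = \sum_(q <- dfilt r) q.2 *: x q.1 a.
Proof.
move=> Hx; rewrite /dfilt big_filter big_mkcond /prod_lin_row.
apply: eq_bigr => q _; rewrite /Db; case: asboolP => //= [[v Hv]].
by rewrite (Hx _ _ Hv) scaler0.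
Qed.

Lemma Xs_sub F v w : Xs F v -> Xs F w -> Hs F (fun a => v a - w a).
Proof.
move=> [x [Ax [xj Sx]]] [y [Ay [yj Sy]]].
exists (fun k a => x k a - y k a); split; last split.
- by move=> k v' H a; rewrite (Ax _ _ H) (Ay _ _ H) subrr.
- by rewrite xj yj.
move=> i Hi; apply: (fs_ext _ (fs_sub (Sx i Hi) (Sy i Hi))) => a.
by rewrite plr_sub opprB addrA subrK.
Qed.

Lemma Xs_add F v h : Xs F v -> Hs F h -> Xs F (fun a => v a + h a).
Proof.
move=> [x [Ax [xj Sx]]] [y [Ay [yj Sy]]].
exists (fun k a => x k a + y k a); split; last split.
- move=> k v' H; apply: functional_extensionality_dep => a.
  by rewrite (Ax _ _ H) (Ay _ _ H) addr0.
- by rewrite xj yj.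
move=> i Hi; apply: (fs_ext _ (fs_add (Sx i Hi) (Sy i Hi))) => a.
by rewrite plr_add /= addrAC.
Qed.

Lemma code_Hs F F' h : code F = code F' -> Hs F h -> Hs F' h.
Proof.
move=> Ec [x [Zx [xj Sx]]].
pose x' k := if Db k then (fun a => 0 : M a) else x (nu F (rho F' k)).
have Zx' : forall k v, G (k, v) -> forall a, x' k a = 0.
  by move=> k v H a; rewrite /x' /Db; case: asboolP => // [[]]; exists v.
exists x'; split=> //; split.
  rewrite /x' /Db; case: asboolP => [H|_]; first by case: hj.
  by rewrite /rho /jeq; case: asboolP => // _; rewrite /nu.
move=> i' Hi'; have [t [Ht Hnt]] := In_nth' Hi'.
have Es : size F = size F'.
  by have := congr1 size Ec; rewrite /code !size_map.
pose i := nth i' F t.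
have Hi : List.In i F by apply: nth_In; rewrite Es.
apply: (fs_ext _ (Sx i Hi)) => a.
rewrite (plr_dfilt _ _ Zx) (plr_dfilt _ _ Zx').
have Ecode := congr1 (fun c => nth [::] c t) Ec.
rewrite /= /code (nth_map i') ?Es // (nth_map i') // -/i Hnt in Ecode.
transitivity (\sum_(q <- dfilt (row i)) q.2 *: x (nu F (rho F q.1)) a).
  apply: sum_ext_In => q Hq; rewrite nu_rho //.
  by apply: (vl_In (q := q) Hi); apply: (In_filter Hq).
rewrite -(big_map (fun q => (rho F q.1, q.2)) xpredT (fun q => q.2 *: x (nu F q.1) a)).
rewrite Ecode big_map /dfilt big_filter [RHS]big_filter.
apply: eq_bigr => q Hq; by rewrite /x' (negbTE Hq).
Qed.



Lemma extend (fR : R -> nat) (hR : injective fR) (hG : good) :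
  exists v, forall F, Xs F v.
Proof.
pose cnt (c : seq (seq (nat * R))) := pickle (map (map (fun q => (q.1, fR q.2))) c).
have cnt_inj : injective cnt.
  move=> c1 c2 /(pcan_inj pickleK); apply: inj_map; apply: inj_map => -[n1 r1] [n2 r2] /= [-> /hR ->] //.
have hGn n : exists F0, (exists F, cnt (code F) = n) -> cnt (code F0) = n.
  have [[F HF]|H] := pselect (exists F, cnt (code F) = n).
    by exists F.
  by exists [::].
pose Gs n := proj1_sig (cid (hGn n)).
have GsP F : code (Gs (cnt (code F))) = code F.
  apply: cnt_inj; apply: (proj2_sig (cid (hGn (cnt (code F))))); by exists F.
pose K n := cumul Gs n.
have Km : forall n n' i, (n <= n')%N -> List.In i (K n) -> List.In i (K n').
  by move=> n n' i Hn Hi; apply: cumul_mono Hn Hi.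
have hK : forall n, exists x, agree x /\ solved (K n) x by move=> n; apply: hG.
have [xs [Axs Sxs]] := diag Km hK.
exists (xs j) => F.
pose G0 := Gs (cnt (code F)).
have [y [Ay Sy]] := hG (F ++ G0).
have XF : Xs F (y j).
  exists y; split=> //; split=> // i Hi; apply: Sy; apply: List.in_or_app; by left.
have XG : Xs G0 (y j).
  exists y; split=> //; split=> // i Hi; apply: Sy; apply: List.in_or_app; by right.
have XG' : Xs G0 (xs j).
  exists xs; split=> //; split=> // i Hi; apply: (Sxs (cnt (code F))).
  exact: (cumul_in (leqnn _) Hi).
have H1 := Xs_sub XG' XG.
have H2 := code_Hs (GsP F) H1.
have := Xs_add XF H2.
suff -> : (fun a => y j a + (xs j a - y j a)) = xs j by [].
by apply: functional_extensionality_dep => a; rewrite addrC subrK.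
Qed.

End Main.

Lemma chain_good (R : nzRingType) (A : Type) (M : A -> lmodType R)
  (I J : Type) (row : I -> seq (J * R)) (m : I -> forall a, M a)
  (hfin : forall F : seq I, exists x : J -> forall a, M a,
        forall i, List.In i F -> eq_mod_sum (prod_lin_row (row i) x) (m i))
  (C : set (set (J * (forall a, M a)))) :
  (forall X, C X -> good row m X) -> total_on C subset ->
  good row m (fun q => exists2 X, C X & X q).
Proof.
move=> CP Ctot.
set U := fun q => _.
have Ufun k v w : U (k, v) -> U (k, w) -> v = w.
  move=> [X1 C1 H1] [X2 C2 H2].
  have [S12|S21] := Ctot _ _ C1 C2.
    have [x [Ax _]] := CP _ C2 [::].
    by rewrite -(Ax _ _ H2) -(Ax _ _ (S12 _ H1)).
  have [x [Ax _]] := CP _ C1 [::].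
  by rewrite -(Ax _ _ H1) -(Ax _ _ (S21 _ H2)).
have Hl (l : seq J) : (exists2 X, C X & forall k, List.In k l ->
      (exists v, U (k, v)) -> exists v, X (k, v)) \/
    (forall k, List.In k l -> ~ exists v, U (k, v)).
  elim: l => [|k l [[X CX HX]|IH]]; first by right.
  - have [[v [Y CY Yv]]|Hk] := pselect (exists v, U (k, v)).
      have [SXY|SYX] := Ctot _ _ CX CY.
        left; exists Y => // k' [<-|Hk'] Hu; first by exists v.
        by have [v' Xv'] := HX k' Hk' Hu; exists v'; apply: SXY.
      left; exists X => // k' [<-|Hk'] Hu; first by exists v; apply: SYX.
      exact: HX.
    left; exists X => // k' [<-|Hk'] Hu; first by case: Hk.
    exact: HX.
  - have [[v [Y CY Yv]]|Hk] := pselect (exists v, U (k, v)).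
      left; exists Y => // k' [<-|Hk'] Hu; first by exists v.
      by case: (IH _ Hk').
    by right => k' [<-|Hk'] //; apply: IH.
move=> F.
have [x0 [Ax0 Sx0]] : exists x0 : J -> forall a, M a,
    (forall k v, List.In k (vl row F) -> U (k, v) -> x0 k = v) /\ solved row m F x0.
  have [[X CX HX]|Hn] := Hl (vl row F).
    have [x [Ax Sx]] := CP _ CX F.
    exists x; split=> // k v Hk Hu.
    have [v' Xv'] := HX k Hk (ex_intro _ v Hu).
    rewrite (Ax _ _ Xv'); apply: Ufun (Hu); by exists X.
  have [x Sx] := hfin F; exists x; split=> // k v Hk Hu.
  by case: (Hn k Hk); exists v.
pose x k := match pselect (exists v, U (k, v)) with
  | left h => proj1_sig (cid h) | right _ => x0 k end.
have xU k (h : exists v, U (k, v)) : U (k, x k).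
  rewrite /x; case: (pselect (exists v, U (k, v))) => [h'|hn].
    exact: (proj2_sig (cid h')).
  by case: (hn h).
exists x; split.
  by move=> k v Hu; apply: Ufun (xU k (ex_intro _ v Hu)) Hu.
move=> i Hi; suff -> : prod_lin_row (row i) x = prod_lin_row (row i) x0 by apply: Sx0.
apply: plr_ext => q Hq; rewrite /x; case: pselect => [h|//].
symmetry; apply: Ax0; first exact: (vl_In (q := q) Hi).
exact: (proj2_sig (cid h)).
Qed.

Theorem theorem4 (R : nzRingType) (A : Type) (M : A -> lmodType R)
  (B : A -> Prop) :
  countable_type R ->
  countable_subset B ->
  (forall a, B a -> ~ alg_compact (M a)) ->
  (forall a, ~ B a -> alg_compact (M a)) ->
  alg_compact_prod_mod_sum M.
Proof.
move=> [fR hR] [fB hfB] _ hac I J row m hfin.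
have [A0 [gA0 maxA0]] := @Zorn_bigcup _ (good row m) (fun C CP Ctot =>
  chain_good hfin CP Ctot).
have tot k : exists v, A0 (k, v).
  apply: contrapT => hj.
  have [v Hv] := extend hfB hac hj hR gA0.
  apply: (maxA0 (fun q => A0 q \/ q = (k, v))).
    split; first by move=> q Hq; left.
    by move=> /(_ (k, v) (or_intror erefl)) H; apply: hj; exists v.
  move=> F; have [x [Ax [xk Sx]]] := Hv F.
  exists x; split=> // k' v' [H|[-> ->]] //; exact: Ax.
pose xf k := proj1_sig (cid (tot k)).
exists xf => i.
have [x [Ax Sx]] := gA0 [:: i].
have -> : xf = x.
  apply: functional_extensionality_dep => k; symmetry; apply: Ax.
  exact: (proj2_sig (cid (tot k))).
by apply: Sx; left.
Qed.
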